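(* A family of structures $\mathfrak{K}$ is $\mathbf{PL}$-learnable if and only if $\mathfrak{K}$ is a $\Sigma^{\mathrm{inf}}_2$-antichain, i.e., for any two distinct $\mathcal{A},\mathcal{B}\in\mathfrak{K}$ there are $\Sigma^{\mathrm{inf}}_2$ sentences $\varphi,\psi$ with $\mathcal{A}\models\varphi$, $\mathcal{B}\not\models\varphi$, $\mathcal{B}\models\psi$, $\mathcal{A}\not\models\psi$.
   Context: All structures are countable, have domain $\mathbb{N}$, are in a finite relational signature, and are identified with their atomic diagrams. A family of structures $\mathfrak{K}$ is a countable set of pairwise nonisomorphic such structures. $\mathcal{S}\restriction_s$ is the finite substructure of $\mathcal{S}$ on $\{0,\dots,s\}$. $\mathrm{LD}(\mathfrak{K})$ is the set of structures with domain $\mathbb{N}$ isomorphic to a member of $\mathfrak{K}$. The hypothesis space is $\{\ulcorner\mathcal{A}\urcorner:\mathcal{A}\in\mathfrak{K}\}\cup\{?\}$; a learner is an arbitrary function $\mathbf{M}$ from $\{\mathcal{S}\restriction_s:\mathcal{S}\in\mathrm{LD}(\mathfrak{K})\}$ to the hypothesis space. $\mathfrak{K}$ is $\mathbf{PL}$-learnable (partially learnable) if there is a learner $\mathbf{M}$ such that for every $\mathcal{S}\in\mathrm{LD}(\mathfrak{K})$ and every $\mathcal{A}\in\mathfrak{K}$: the set $\{n:\mathbf{M}(\mathcal{S}\restriction_n)=\ulcorner\mathcal{A}\urcorner\}$ is infinite iff $\mathcal{A}\cong\mathcal{S}$ (the symbol $?$ may be output infinitely often). Infinitary logic $\mathcal{L}_{\omega_1\omega}$: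 $\Sigma^{\mathrm{inf}}_0=\Pi^{\mathrm{inf}}_0$ formulas are finitary quantifier-free; a $\Sigma^{\mathrm{inf}}_\alpha$ formula is a countable disjunction $\bigvee_i\exists\bar y_i\,\psi_i$ with $\psi_i\in\Pi^{\mathrm{inf}}_{\beta_i}$, $\beta_i<\alpha$; a $\Pi^{\mathrm{inf}}_\alpha$ formula is a countable conjunction $\bigwedge_i\forall\bar y_i\,\psi_i$ with $\psi_i\in\Sigma^{\mathrm{inf}}_{\beta_i}$, $\beta_i<\alpha$ (free variables among a fixed finite tuple). *)

(* Defs.v *)
From mathcomp Require Import all_boot.
Set Implicit Arguments. Unset Strict Implicit. Unset Printing Implicit Defensive.

(* A finite relational signature is a list of arities; relation symbols are
   the indices 'I_(size sig), symbol i having arity (nth 0 sig i). *)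
Definition arity (sig : seq nat) (i : 'I_(size sig)) : nat := nth 0 sig i.

Definition structure (sig : seq nat) : Type :=
  forall i : 'I_(size sig), (arity i).-tuple nat -> bool.

Section Structures.
Variable sig : seq nat.

Definition iso (A B : structure sig) : Prop :=
  exists f : nat -> nat, bijective f /\
    forall (i : 'I_(size sig)) (t : (arity i).-tuple nat),
      B i (map_tuple f t) = A i t.

(* The finite substructure S|s on {0,...,s}, represented by the pair
   (s, relations of S restricted to tuples from {0,...,s}). *)
Definition restrict (S : structure sig) (s : nat) : nat * structure sig :=
  (s, fun (i : 'I_(size sig)) (t : (arity i).-tuple nat) =>
        all (fun x => x <= s) t && S i t).

Inductive qf : Type :=
  | QTrue | QFalse
  | QEq (x y : nat)
  | QRel (i : 'I_(size sig)) (xs : (arity i).-tuple nat)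
  | QNeg (q : qf)
  | QAnd (q1 q2 : qf)
  | QOr (q1 q2 : qf).

Fixpoint qvars (q : qf) : seq nat :=
  match q with
  | QTrue | QFalse => [::]
  | QEq x y => [:: x; y]
  | QRel _ xs => val xs
  | QNeg q => qvars q
  | QAnd q1 q2 | QOr q1 q2 => qvars q1 ++ qvars q2
  end.

Fixpoint qsat (A : structure sig) (e : nat -> nat) (q : qf) : bool :=
  match q with
  | QTrue => true
  | QFalse => false
  | QEq x y => e x == e y
  | QRel i xs => A i (map_tuple e xs)
  | QNeg q => ~~ qsat A e q
  | QAnd q1 q2 => qsat A e q1 && qsat A e q2
  | QOr q1 q2 => qsat A e q1 || qsat A e q2
  end.

(* Infinitary formulas: countable disjunctions/conjunctions are indexed by a
   subset {i | P i} of nat (this covers every countable index set, including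
   finite and empty ones); quantifiers bind a finite tuple ys of variables. *)
Inductive form : Type :=
  | FQf (q : qf)
  | FOr (P : nat -> bool) (f : nat -> form)
  | FAnd (P : nat -> bool) (f : nat -> form)
  | FEx (ys : seq nat) (phi : form)
  | FAll (ys : seq nat) (phi : form).

Fixpoint isSigma (n : nat) (phi : form) {struct phi} : Prop :=
  match phi with
  | FQf _ => n = 0
  | FOr P f => 0 < n /\ forall i, P i ->
      match f i with
      | FEx _ psi => exists b, b < n /\ isPi b psi
      | _ => False
      end
  | _ => False
  end
with isPi (n : nat) (phi : form) {struct phi} : Prop :=
  match phi with
  | FQf _ => n = 0
  | FAnd P f => 0 < n /\ forall i, P i ->
      match f i with
      | FAll _ psi => exists b, b < n /\ isSigma b psi
      | _ => False
      end
  | _ => False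
  end.

Fixpoint fv_in (xs : seq nat) (phi : form) : Prop :=
  match phi with
  | FQf q => all (fun x => x \in xs) (qvars q)
  | FOr P f | FAnd P f => forall i, P i -> fv_in xs (f i)
  | FEx ys psi | FAll ys psi => fv_in (ys ++ xs) psi
  end.

Definition sentence (phi : form) : Prop := fv_in [::] phi.

Fixpoint sat (A : structure sig) (e : nat -> nat) (phi : form) : Prop :=
  match phi with
  | FQf q => qsat A e q
  | FOr P f => exists i, P i /\ sat A e (f i)
  | FAnd P f => forall i, P i -> sat A e (f i)
  | FEx ys psi => exists g : nat -> nat,
      sat A (fun x => if x \in ys then g x else e x) psi
  | FAll ys psi => forall g : nat -> nat,
      sat A (fun x => if x \in ys then g x else e x) psi
  end.

(* A |= phi for a sentence phi (the assignment is irrelevant). *)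
Definition models (A : structure sig) (phi : form) : Prop := sat A (fun _ => 0) phi.

Definition Sigma2_sentence (phi : form) : Prop := isSigma 2 phi /\ sentence phi.

Variable I : Type.

Definition structure_family (K : I -> structure sig) : Prop :=
  (exists c : I -> nat, injective c) /\
  (forall i j, iso (K i) (K j) -> i = j).

Definition LD (K : I -> structure sig) (S : structure sig) : Prop :=
  exists j, iso (K j) S.

(* Hypotheses: Some i = the code of K i, None = '?'.  A learner is an arbitrary
   function from finite substructures S|s (pairs (s, S|s)) to hypotheses. *)
Definition PL_learnable (K : I -> structure sig) : Prop :=
  exists M : nat * structure sig -> option I,
    forall S, LD K S -> forall i,
      ((forall m, exists n, m <= n /\ M (restrict S n) = Some i) <-> iso (K i) S).

Definition Sigma2_antichain (K : I -> structure sig) : Prop :=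
  forall i j, i <> j ->
    exists phi psi, Sigma2_sentence phi /\ Sigma2_sentence psi /\
      models (K i) phi /\ ~ models (K j) phi /\
      models (K j) psi /\ ~ models (K i) psi.

End Structures.

(* Main.v *)
Require Import Defs.
From mathcomp Require Import all_boot.
From Stdlib Require Import ClassicalEpsilon FunctionalExtensionality Classical.
Set Implicit Arguments. Unset Strict Implicit. Unset Printing Implicit Defensive.

Section Basics.
Variable sig : seq nat.

Definition dec (P : Prop) : bool := if excluded_middle_informative P then true else false.
Lemma decP (P : Prop) : reflect P (dec P).
Proof. rewrite /dec; case: excluded_middle_informative => h; by constructor. Qed.

Definition pull (B : structure sig) (G : nat -> nat) : structure sig :=
  fun i t => B i (map_tuple G t).

Lemma map_tuple_comp n (f g : nat -> nat) (t : n.-tuple nat) :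
  map_tuple f (map_tuple g t) = map_tuple (f \o g) t.
Proof. apply: val_inj => /=; by rewrite map_comp. Qed.

Lemma map_tuple_can n (f g : nat -> nat) (gf : cancel g f) (t : n.-tuple nat) :
  map_tuple f (map_tuple g t) = t.
Proof. apply: val_inj => /=; exact: (mapK gf). Qed.

Lemma iso_pull (B : structure sig) G : bijective G -> iso B (pull B G).
Proof.
case=> g Gg gG. exists g; split; first by exists G.
move=> i t; rewrite /pull. by rewrite map_tuple_can.
Qed.

Lemma iso_sym (A B : structure sig) : iso A B -> iso B A.
Proof.
case=> f [[g fg gf] H]. exists g; split; first by exists f.
move=> i t. by rewrite -H map_tuple_can.
Qed.

Lemma iso_trans (A B C : structure sig) : iso A B -> iso B C -> iso A C.
Proof.
case=> f [bf H1] [h [bh H2]]. exists (h \o f); split; first exact: bij_comp.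
move=> i t. by rewrite -map_tuple_comp H2 H1.
Qed.

Lemma qsat_iso (A B : structure sig) f (Hf : injective f)
  (H : forall i t, B i (map_tuple f t) = A i t) e (q : qf sig) :
  qsat B (f \o e) q = qsat A e q.
Proof.
elim: q => //= [x y|i xs|q ->|q1 -> q2 ->|q1 -> q2 ->] //.
- by rewrite inj_eq.
- by rewrite -H map_tuple_comp.
Qed.

Definition upd (ys : seq nat) (g e : nat -> nat) : nat -> nat :=
  fun x => if x \in ys then g x else e x.

Lemma sat_iso (A B : structure sig) f g (fg : cancel f g) (gf : cancel g f)
  (H : forall i t, B i (map_tuple f t) = A i t) (phi : form sig) :
  forall e, sat B (f \o e) phi <-> sat A e phi.
Proof.
elim: phi => [q|P h IH|P h IH|ys psi IH|ys psi IH] e /=.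
- by rewrite (qsat_iso (can_inj fg) H).
- split=> [[i [Pi Hi]]|[i [Pi Hi]]]; exists i; split=> //; by apply/IH.
- split=> Hi i Pi; apply/IH; exact: Hi.
- split=> [[g0 Hg]|[g0 Hg]].
  + exists (g \o g0). apply/IH.
    have -> : (f \o (fun x => if x \in ys then (g \o g0) x else e x)) =
              (fun x => if x \in ys then g0 x else (f \o e) x).
      by apply: functional_extensionality => x /=; case: ifP => // _; rewrite gf.
    exact: Hg.
  + exists (f \o g0).
    have <- : (f \o (fun x => if x \in ys then g0 x else e x)) =
              (fun x => if x \in ys then (f \o g0) x else (f \o e) x).
      by apply: functional_extensionality => x /=; case: ifP.
    by apply/IH.
- split=> Hg g0.
  + have := Hg (f \o g0). 
    have -> : (fun x => if x \in ys then (f \o g0) x else (f \o e) x) =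
              (f \o (fun x => if x \in ys then g0 x else e x)).
      by apply: functional_extensionality => x /=; case: ifP.
    by move/IH.
  + have -> : (fun x => if x \in ys then g0 x else (f \o e) x) =
              (f \o (fun x => if x \in ys then (g \o g0) x else e x)).
      by apply: functional_extensionality => x /=; case: ifP => // _; rewrite gf.
    by apply/IH.
Qed.

Lemma qsat_ext (A : structure sig) e1 e2 (q : qf sig) :
  (forall x, x \in qvars q -> e1 x = e2 x) -> qsat A e1 q = qsat A e2 q.
Proof.
elim: q => //= [x y|i xs|q IH|q1 IH1 q2 IH2|q1 IH1 q2 IH2] H.
- by rewrite !H // !inE eqxx ?orbT.
- congr (A i _); apply: val_inj => /=; apply/eq_in_map => x; exact: H.
- by rewrite IH.
- by rewrite IH1 ?IH2 // => x hx; apply: H; rewrite mem_cat hx ?orbT.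
- by rewrite IH1 ?IH2 // => x hx; apply: H; rewrite mem_cat hx ?orbT.
Qed.

Lemma sat_fv (A : structure sig) (phi : form sig) :
  forall xs e1 e2, fv_in xs phi -> (forall x, x \in xs -> e1 x = e2 x) ->
  (sat A e1 phi <-> sat A e2 phi).
Proof.
elim: phi => [q|P h IH|P h IH|ys psi IH|ys psi IH] xs e1 e2 /= fv H.
- rewrite (@qsat_ext A e1 e2 q) //. move=> x hx; apply: H. exact: (allP fv).
- split=> [[i [Pi Hi]]|[i [Pi Hi]]]; exists i; split=> //;
    [apply/(IH i xs e1 e2) | apply/(IH i xs e1 e2)] => //; exact: fv.
- split=> Hi i Pi; [apply/(IH i xs e1 e2) | apply/(IH i xs e1 e2)] => //;
    try exact: fv; exact: Hi.
- have E g0 : forall x, x \in ys ++ xs ->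
     (fun x => if x \in ys then g0 x else e1 x) x = (fun x => if x \in ys then g0 x else e2 x) x.
    move=> x /=; rewrite mem_cat; case: ifP => //= _ hx; exact: H.
  split=> [[g0 Hg]|[g0 Hg]]; exists g0; [apply/(IH _ _ _ fv (E g0)) | apply/(IH _ _ _ fv (E g0))]; done.
- have E g0 : forall x, x \in ys ++ xs ->
     (fun x => if x \in ys then g0 x else e1 x) x = (fun x => if x \in ys then g0 x else e2 x) x.
    move=> x /=; rewrite mem_cat; case: ifP => //= _ hx; exact: H.
  split=> Hg g0; [apply/(IH _ _ _ fv (E g0)) | apply/(IH _ _ _ fv (E g0))]; done.
Qed.

Lemma models_iso (A B : structure sig) (phi : form sig) :
  iso A B -> sentence phi -> models A phi -> models B phi.
Proof.
case=> f [[g fg gf] H] sp hA.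
have := (sat_iso fg gf H phi (fun _ => 0)).2 hA.
move=> h; exact: (iffLR (@sat_fv B phi [::] (f \o (fun=> 0)) (fun _ => 0) sp (fun x (hx : x \in [::]) => ltac:(done)))) h.
Qed.

Lemma qsat_restr (S : structure sig) n e (q : qf sig) :
  all (fun x => e x <= n) (qvars q) -> qsat (restrict S n).2 e q = qsat S e q.
Proof.
elim: q => //= [i xs|q IH|q1 IH1 q2 IH2|q1 IH1 q2 IH2].
- by move=> H; rewrite all_map H.
- by move=> H; rewrite IH.
- by rewrite all_cat => /andP[h1 h2]; rewrite IH1 ?IH2.
- by rewrite all_cat => /andP[h1 h2]; rewrite IH1 ?IH2.
Qed.

End Basics.

Section Diag.
Variable sig : seq nat.

Definition bigand (l : seq (qf sig)) : qf sig := foldr (@QAnd sig) (QTrue sig) l.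

Lemma qsat_bigand A e l : qsat A e (bigand l) = all (qsat A e) l.
Proof. by elim: l => //= q l ->. Qed.

Lemma qvars_bigand l : qvars (bigand l) = flatten (map (@qvars sig) l).
Proof. by elim: l => //= q l ->. Qed.

Lemma all_flat (T : Type) (p : pred T) (l : seq (seq T)) : all p (flatten l) = all (all p) l.
Proof. by elim: l => //= s l <-; rewrite all_cat. Qed.

Fixpoint tuples (n N : nat) : seq (n.-tuple nat) :=
  match n return seq (n.-tuple nat) with
  | 0 => [:: [tuple]]
  | n'.+1 => flatten [seq [seq cons_tuple x t | t <- tuples n' N] | x <- iota 0 N]
  end.

Lemma all_tuples n N (P : pred (n.-tuple nat)) :
  all P (tuples n N) <-> (forall t : n.-tuple nat, all (fun x => x < N) t -> P t).
Proof.
elim: n P => [|n IH] P /=.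
  rewrite andbT; split=> [H t _|H]; last exact: H.
  by rewrite tuple0.
rewrite all_flat all_map; split.
- move=> H t; case/tupleP: t => x t /= /andP[xN tN].
  have := allP H x; rewrite mem_iota /= => /(_ xN) /=.
  rewrite all_map => /IH; apply; done.
- move=> H; apply/allP => x; rewrite mem_iota /= => xN /=.
  rewrite all_map; apply/IH => t tN; apply: H => /=; by rewrite xN.
Qed.

Definition lit (B : structure sig) g (i : 'I_(size sig)) (t : (arity i).-tuple nat) : qf sig :=
  if B i (map_tuple g t) then QRel t else QNeg (QRel t).
Definition eqlit (g : nat -> nat) (x y : nat) : qf sig :=
  if g x == g y then @QEq sig x y else QNeg (@QEq sig x y).
Definition diagq (B : structure sig) g N : qf sig :=
  bigand (flatten [seq [seq lit B g t | t <- tuples (arity i) N] | i <- enum 'I_(size sig)]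
          ++ flatten [seq [seq eqlit g x y | y <- iota 0 N] | x <- iota 0 N]).

Lemma diagP (A B : structure sig) e g N :
  qsat A e (diagq B g N) <->
  (forall i (t : (arity i).-tuple nat), all (fun x => x < N) t ->
      A i (map_tuple e t) = B i (map_tuple g t)) /\
  (forall x y, x < N -> y < N -> (e x == e y) = (g x == g y)).
Proof.
rewrite qsat_bigand all_cat !all_flat !all_map.
split.
- case/andP=> /allP H1 /allP H2; split.
  + move=> i t tN. have := H1 i (mem_index_enum i). rewrite /= all_map => /all_tuples/(_ t tN).
    rewrite /= /lit; case hb: (B i (map_tuple g t)); case ha: (A i (map_tuple e t)) => /=; by rewrite ?ha.
  + move=> x y xN yN. have := H2 x; rewrite mem_iota /= => /(_ xN). rewrite /= all_map => /allP/(_ y).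
    rewrite mem_iota /= => /(_ yN) /=. rewrite /eqlit. case: (g x == g y) => /=; case: (e x == e y) => //=.
- case=> H1 H2; apply/andP; split.
  + apply/allP => i _ /=; rewrite all_map; apply/all_tuples => t tN /=.
    rewrite /lit; case hb: (B i (map_tuple g t)) => /=; by rewrite (H1 i t tN) hb.
  + apply/allP => x; rewrite mem_iota /= => xN; rewrite all_map; apply/allP => y.
    rewrite mem_iota /= => yN /=.
    rewrite /eqlit; case hg: (g x == g y) => /=; by rewrite (H2 x y xN yN) hg.
Qed.

Lemma diag_self (B : structure sig) e g N :
  (forall x, x < N -> e x = g x) -> qsat B e (diagq B g N).
Proof.
move=> H; apply/diagP; split.
- move=> i t tN; congr (B i _); apply: val_inj => /=; apply/eq_in_map => x xt.
  apply: H; exact: (allP tN).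
- by move=> x y xN yN; rewrite !H.
Qed.

Lemma qvars_diag (B : structure sig) g N : all (fun x => x < N) (qvars (diagq B g N)).
Proof.
rewrite qvars_bigand all_flat all_map all_cat !all_flat !all_map; apply/andP; split.
- apply/allP => i _ /=; rewrite all_map; apply/all_tuples => t tN /=; rewrite /lit.
  by case: (B i _).
- apply/allP => x; rewrite mem_iota => /= xN; rewrite all_map; apply/allP => y.
  rewrite mem_iota /= => yN /=; rewrite /eqlit; case: ifP => /=; by rewrite xN yN.
Qed.

End Diag.

Section NoPL.
Variable sig : seq nat.

Definition sofn (n : nat) : seq nat := odflt [::] (@unpickle (seq nat) n).

Definition realized (A B : structure sig) (a : nat -> nat) (m : nat) (s : seq nat) : Prop :=
  exists e, (forall x, x < m -> e x = a x) /\ qsat A e (diagq B (nth 0 s) (size s)).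

Definition qn A B a m n : qf sig :=
  if (m <= size (sofn n)) && dec (~ realized A B a m (sofn n))
  then QNeg (diagq B (nth 0 (sofn n)) (size (sofn n))) else QTrue sig.

Definition phia A B a m : form sig :=
  FOr (fun _ => true) (fun _ => FEx (iota 0 m) (FAnd (fun _ => true)
     (fun n => FAll (iota m (size (sofn n) - m)) (FQf (qn A B a m n))))).

Lemma phia_S2 A B a m : Sigma2_sentence (phia A B a m).
Proof.
split.
- split=> // k _ /=. exists 1; split=> //=; split=> // n _; exists 0; split => //.
- move=> k _ /= n _ /=. rewrite /qn. case: ifP => //= /andP[mN _].
  apply/allP => x hx. have := allP (qvars_diag B (nth 0 (sofn n)) (size (sofn n))) x hx.
  rewrite !mem_cat !mem_iota /= => xN. rewrite orbF add0n subnKC //.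
  by case: (leqP m x) => /=; rewrite ?xN ?orbT.
Qed.

Lemma phia_A A B a m : models A (phia A B a m).
Proof.
exists 0; split=> //. exists a => n _ g' /=. rewrite /qn.
case: ifP => //= /andP[_ /decP nr]. apply/negP => Hq; apply: nr.
eexists; split; last exact: Hq.
move=> x xm /=. by rewrite mem_iota leqNgt xm /= mem_iota /= add0n xm.
Qed.

Lemma phia_B A B a m : models B (phia A B a m) ->
  exists b, forall s, m <= size s -> (forall x, x < m -> nth 0 s x = b x) -> realized A B a m s.
Proof.
case=> k [_ [b Hb]]. exists b => s ms sb. apply: NNPP => nr.
have := Hb (pickle s) isT (nth 0 s). rewrite /qn /sofn pickleK /= ms.
have -> : dec (~ realized A B a m s) = true by apply/decP.
move=> /= /negP; apply. apply: diag_self => x xs /=.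
rewrite mem_iota. case: (leqP m x) => mx /=.
- by rewrite subnKC // xs.
- by rewrite mem_iota /= add0n mx sb.
Qed.

End NoPL.

Definition injm (a : nat -> nat) m := forall x y, x < m -> y < m -> a x = a y -> x = y.

Definition swapn (u v x : nat) := if x == u then v else if x == v then u else x.
Lemma swapnK u v : involutive (swapn u v).
Proof.
move=> x. rewrite /swapn.
have [->|xu] := eqVneq x u.
  by have [->|vu] := eqVneq v u; rewrite ?eqxx.
have [->|xv] := eqVneq x v; first by rewrite !eqxx.
by rewrite (negbTE xu) (negbTE xv).
Qed.

Lemma ext_bij m (b : nat -> nat) : injm b m ->
  exists G, bijective G /\ forall x, x < m -> G x = b x.
Proof.
elim: m => [|m IH] Hb.
  by exists id; split => //; exists id.
have [G [bG HG]] : exists G, bijective G /\ forall x, x < m -> G x = b x.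
  apply: IH => x y xm ym; apply: Hb; by rewrite ltnS ltnW.
exists (swapn (G m) (b m) \o G); split.
  apply: bij_comp => //; exact: (inv_bij (swapnK _ _)).
move=> x; rewrite ltnS leq_eqVlt => /orP[/eqP->|xm] /=.
  by rewrite /swapn eqxx.
rewrite (HG x xm) /swapn.
have -> : (b x == G m) = false.
  apply/eqP => e. have : G x = G m by rewrite HG.
  move/(bij_inj bG) => xm'. by rewrite xm' ltnn in xm.
have -> : (b x == b m) = false.
  apply/eqP => /Hb. rewrite ltnS ltnW // => /(_ isT (ltnSn m)) xm'.
  by rewrite xm' ltnn in xm.
done.
Qed.

Lemma restr_eq (sig : seq nat) (S T : structure sig) n :
  (forall k (t : (arity k).-tuple nat), all (fun x => x <= n) t -> S k t = T k t) ->
  restrict S n = restrict T n.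
Proof.
move=> H; rewrite /restrict; congr pair.
apply: functional_extensionality_dep => k; apply: functional_extensionality => t.
case E: (all _ t) => //=. exact: H.
Qed.

Section Construction.
Variable sig : seq nat.
Variables (I : Type) (K : I -> structure sig) (M : nat * structure sig -> option I).
Hypothesis HM : forall S, LD K S -> forall i,
  ((forall m, exists n, m <= n /\ M (restrict S n) = Some i) <-> iso (K i) S).
Variables (i j : I).
Hypothesis Hb : forall a m, exists b, forall s, m <= size s ->
   (forall x, x < m -> nth 0 s x = b x) -> realized (K i) (K j) a m s.

Lemma step r m a : injm a m -> exists m' a',
  [/\ m < m', (forall x, x < m -> a' x = a x), (exists2 x, x < m' & a' x = r), injm a' m'
    & M (restrict (pull (K i) a') m'.-1) = Some j].
Proof.
move=> ia.
have [m1 [a1 [mm1 [aa1 [[x0 x0m ax0] ia1]]]]] : exists m1 a1, m <= m1 /\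
   (forall x, x < m -> a1 x = a x) /\ (exists2 x, x < m1 & a1 x = r) /\ injm a1 m1.
  case: (classic (exists2 x, x < m & a x = r)) => [h|h].
    by exists m, a.
  exists m.+1, (fun x => if x < m then a x else r); split => //; split.
    by move=> x ->.
  split. by exists m => //; rewrite ltnn.
  move=> x y; rewrite !ltnS => xm ym.
  case: (ltnP x m) => xm'; case: (ltnP y m) => ym'.
  - exact: ia.
  - by move=> e; case: h; exists x.
  - by move=> e; case: h; exists y.
  - by move=> _; apply/eqP; rewrite eqn_leq (leq_trans xm ym') (leq_trans ym xm').
have [b Hb1] := Hb a1 m1.
have ib : injm b m1.
  have := Hb1 (map b (iota 0 m1)). rewrite size_map size_iota leqnn => /(_ isT).
  case. move=> x xm; by rewrite (nth_map 0) ?size_iota // nth_iota.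
  move=> e [ea /diagP [_ Heq]] x y xm ym bxy.
  apply: ia1 => //. rewrite -!ea //. apply/eqP; rewrite Heq ?size_map ?size_iota //.
  by rewrite !(nth_map 0) ?size_iota // !nth_iota // bxy.
have [G [bG HG]] := ext_bij ib.
pose T := pull (K j) G.
have isoT : iso (K j) T := iso_pull _ bG.
have [n [m1n Mn]] := (HM (ex_intro _ j isoT) j).2 isoT m1.
pose s := map G (iota 0 n.+1).
have ns x : x < n.+1 -> nth 0 s x = G x.
  by move=> xn; rewrite (nth_map 0) ?size_iota // nth_iota.
have := Hb1 s. rewrite size_map size_iota (leqW m1n) => /(_ isT).
case=> [x xm|e [ea /diagP [Hrel Heq]]].
  by rewrite ns ?HG // ltnS (leq_trans _ m1n) // ltnW.
have ss : size s = n.+1 by rewrite size_map size_iota.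
exists n.+1, e; split.
- by rewrite ltnS (leq_trans mm1 m1n).
- move=> x xm; rewrite ea ?aa1 //; exact: leq_trans xm mm1.
- exists x0; last by rewrite ea.
  by rewrite ltnS (leq_trans _ m1n) // ltnW.
- move=> x y xn yn exy. have := Heq x y; rewrite ss => /(_ xn yn).
  rewrite exy eqxx !ns // => /esym/eqP. exact: (bij_inj bG).
- rewrite -Mn /=; congr M; apply: restr_eq => k t tn.
  rewrite /pull /T Hrel; last by rewrite ss.
  have -> : map_tuple (nth 0 s) t = map_tuple G t.
    apply: val_inj => /=; apply/eq_in_map => x xt; apply: ns.
    exact: (allP tn).
  done.
Qed.


Lemma noPL (ij : i <> j) (Kinj : forall i' j', iso (K i') (K j') -> i' = j') : False.
Proof.
have H : forall r (st : nat * (nat -> nat)), exists st' : nat * (nat -> nat),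
   injm st.2 st.1 -> [/\ st.1 < st'.1, (forall x, x < st.1 -> st'.2 x = st.2 x),
      (exists2 x, x < st'.1 & st'.2 x = r), injm st'.2 st'.1
    & M (restrict (pull (K i) st'.2) st'.1.-1) = Some j].
  move=> r [m a]. case: (classic (injm a m)) => [ia|nia].
    have [m' [a' Hs]] := step r ia. by exists (m', a').
  by exists (m, a).
pose stp r st := proj1_sig (constructive_indefinite_description _ (H r st)).
have stpP : forall r st, injm st.2 st.1 -> [/\ st.1 < (stp r st).1,
      (forall x, x < st.1 -> (stp r st).2 x = st.2 x),
      (exists2 x, x < (stp r st).1 & (stp r st).2 x = r), injm (stp r st).2 (stp r st).1
    & M (restrict (pull (K i) (stp r st).2) (stp r st).1.-1) = Some j].
  move=> r st; exact: (proj2_sig (constructive_indefinite_description _ (H r st))).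
pose sq r := iteri r stp (0, id).
have sqS r : sq r.+1 = stp r (sq r) by [].
have inv r : injm (sq r).2 (sq r).1.
  elim: r => [|r IH]; first by move=> x y.
  by rewrite sqS; case: (stpP r _ IH).
have P r := stpP r (sq r) (inv r).
have ge r : r <= (sq r).1.
  elim: r => // r IH. rewrite sqS. case: (P r) => h _ _ _ _. exact: leq_ltn_trans IH h.
have agree r d : (sq r).1 <= (sq (r + d)).1 /\
    forall x, x < (sq r).1 -> (sq (r + d)).2 x = (sq r).2 x.
  elim: d => [|d [IH1 IH2]]; first by rewrite addn0.
  rewrite addnS sqS. case: (P (r + d)) => h1 h2 _ _ _. split.
    exact: (leq_trans IH1 (ltnW h1)).
  move=> x xr. rewrite h2; first exact: IH2.
  exact: leq_trans xr IH1.
have agr r r' x : r <= r' -> x < (sq r).1 -> (sq r').2 x = (sq r).2 x.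
  move=> rr'; rewrite -(subnKC rr'); exact: (agree r (r' - r)).2.
pose F x := (sq x.+1).2 x.
have FA r x : x < (sq r).1 -> F x = (sq r).2 x.
  move=> xr. rewrite /F -(agr x.+1 (maxn r x.+1) x) ?leq_maxr ?(ge x.+1) //.
  by rewrite (agr r (maxn r x.+1) x) ?leq_maxl.
have Finj : injective F.
  move=> x y e. pose R := (maxn x y).+1.
  have xR : x < (sq R).1 by apply: leq_trans (ge R); rewrite ltnS leq_maxl.
  have yR : y < (sq R).1 by apply: leq_trans (ge R); rewrite ltnS leq_maxr.
  apply: (inv R) => //. by rewrite -(FA R x) // -(FA R y).
have Fsurj y : exists x, F x = y.
  case: (P y) => _ _ [x xy e] _ _. exists x. by rewrite (FA y.+1 x).
pose g y := proj1_sig (constructive_indefinite_description _ (Fsurj y)).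
have gF : cancel g F by move=> y; exact: (proj2_sig (constructive_indefinite_description _ (Fsurj y))).
have bF : bijective F by exists g => // x; apply: Finj; rewrite gF.
pose S := pull (K i) F.
have isoS : iso (K i) S := iso_pull _ bF.
have isoj : iso (K j) S.
  apply: (HM (ex_intro _ i isoS) j).1 => m.
  exists (sq m.+1).1.-1; split.
    have := ge m.+1. by case: (sq m.+1).1.
  case: (P m) => h1 _ _ _ <-. rewrite -sqS. congr M; apply: restr_eq => k t tn.
  rewrite /S /pull. have -> // : map_tuple F t = map_tuple (sq m.+1).2 t.
  apply: val_inj => /=; apply/eq_in_map => x xt.
  apply: (FA m.+1). have := allP tn x xt. have := ge m.+1. by case: (sq m.+1).1.
apply: ij; apply: Kinj. exact: (iso_trans isoS (iso_sym isoj)).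
Qed.

End Construction.

Section Dead.
Variable sig : seq nat.

Definition refQ (q : qf sig) (e : nat -> nat) (d : nat * structure sig) : Prop :=
  all (fun x => e x <= d.1) (qvars q) /\ ~~ qsat d.2 e q.

Definition refPi (psi : form sig) e d : Prop :=
  match psi with
  | FQf q => refQ q e d
  | FAnd P h => exists l, P l /\
      match h l with FAll ys (FQf th) => exists g, refQ th (upd ys g e) d | _ => True end
  | _ => True end.

Definition deadC (phi : form sig) (c : nat * seq nat) d : Prop :=
  match phi with
  | FOr P f => ~~ P c.1 \/
      match f c.1 with FEx ys psi => refPi psi (upd ys (nth 0 c.2) (fun _ => 0)) d | _ => True end
  | _ => True end.

Lemma refQ_mono S q e n n' : n <= n' -> refQ q e (restrict S n) -> refQ q e (restrict S n').
Proof.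
move=> nn' [h1 h2]. have h1' : all (fun x => e x <= n') (qvars q).
  apply: sub_all h1 => x /= h; exact: leq_trans h nn'.
split=> //=. by rewrite qsat_restr // -(qsat_restr S h1).
Qed.

Lemma refQ_restrP S q e n : refQ q e (restrict S n) -> ~~ qsat S e q.
Proof. case=> h1 h2. by rewrite -(qsat_restr S h1). Qed.

Lemma bound_sumn (e : nat -> nat) l : all (fun x => e x <= sumn (map e l)) l.
Proof.
elim: l => //= x l IH; rewrite leq_addr /=; apply: sub_all IH => y /= h.
exact: leq_trans h (leq_addl _ _).
Qed.

Lemma refQ_ex S q e : ~~ qsat S e q -> exists n, refQ q e (restrict S n).
Proof.
move=> h; exists (sumn (map e (qvars q))); split=> /=; first exact: bound_sumn.
by rewrite qsat_restr // bound_sumn.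
Qed.

Lemma mem_sumn x ys : x \in ys -> x <= sumn ys.
Proof.
elim: ys => //= y ys IH; rewrite inE => /orP[/eqP->|h]; first exact: leq_addr.
exact: leq_trans (IH h) (leq_addl _ _).
Qed.

Lemma dead_mono S phi c n n' : n <= n' -> deadC phi c (restrict S n) -> deadC phi c (restrict S n').
Proof.
move=> nn'. case: phi => // P f /=. case=> [hP|hf]; [by left | right]. move: hf.
case: (f c.1) => // ys psi. case: psi => //= [q|P' h]; first exact: refQ_mono.
case=> l [Pl H]; exists l; split=> //; move: H. case: (h l) => // ys' [] // th [g Hg].
exists g; exact: refQ_mono Hg.
Qed.

Lemma pi_shape b (psi : form sig) : b < 2 -> isPi b psi ->
  (exists q, psi = FQf q) \/
  (exists P h, psi = FAnd P h /\ forall l, P l -> exists ys th, h l = FAll ys (FQf th)).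
Proof.
move=> b2; case: psi => [q|P h|P h|ys p|ys p] //= H; first by left; exists q.
right; exists P, h; split=> // l Pl. case: H => _ /(_ l Pl).
case: (h l) => // ys chi [b' [b'1 hc]].
have b0 : b' = 0 by case: b b2 b'1 {hc} => [|[|]] //; case: b'.
rewrite b0 in hc.
case: chi hc => [th _|P1 f1 [] //|||] //; by exists ys, th.
Qed.

Lemma L1 (S : structure sig) phi : Sigma2_sentence phi ->
  (models S phi <-> exists c, forall n, ~ deadC phi c (restrict S n)).
Proof.
case=> hs _. case: phi hs => [q|P f|P f|ys p|ys p] //= [_ hf].
split.
- case=> k [Pk Hk]. have := hf k Pk. move: Hk.
  case E: (f k) => [q|P1 f1|P1 f1|ys psi|ys p] //= [g0 Hg] [b [b2 hb]].
  pose s := map g0 (iota 0 (sumn ys).+1).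
  have ew : upd ys (nth 0 s) (fun _ => 0) = (fun x => if x \in ys then g0 x else 0).
    apply: functional_extensionality => x; rewrite /upd; case: ifP => // xy.
    rewrite (nth_map 0) ?size_iota ?nth_iota // ltnS; exact: mem_sumn xy.
  exists (k, s) => n /=. rewrite Pk E /= ew. case=> // D.
  case: (pi_shape b2 hb) => [[q eq]|[P' [h [eq Hh]]]]; rewrite eq in Hg D.
  + move: D => /refQ_restrP. by rewrite /= Hg.
  + case: D => l [Pl]. case: (Hh l Pl) => ys' [th El]. rewrite El => [[g /refQ_restrP]].
    have := Hg l Pl; rewrite El /= => /(_ g). by move=> ->.
- case=> [[k s] Hn].
  have Pk : P k. apply: NNPP => nP; apply: (Hn 0) => /=; left; exact/negP.
  exists k; split=> //. have := hf k Pk.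
  case E: (f k) => [q|P1 f1|P1 f1|ys psi|ys p] // [b [b2 hb]].
  exists (nth 0 s).
  have HD n : ~ refPi psi (upd ys (nth 0 s) (fun _ => 0)) (restrict S n).
    move=> D; apply: (Hn n) => /=; right; rewrite E; exact: D.
  case: (pi_shape b2 hb) => [[q eq]|[P' [h [eq Hh]]]]; rewrite eq in HD *.
  + apply/negPn/negP => nq. have [n Rn] := refQ_ex nq. exact: (HD n Rn).
  + move=> l Pl. case: (Hh l Pl) => ys' [th El]. rewrite El /= => g.
    apply/negPn/negP => nq. have [n Rn] := refQ_ex nq.
    apply: (HD n); exists l; split=> //; rewrite El; by exists g.
Qed.

End Dead.

Lemma restr_restr (sig : seq nat) (S : structure sig) n :
  restrict (restrict S n).2 n.-1 = restrict S n.-1.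
Proof.
apply: restr_eq => k t tn /=. rewrite (sub_all _ tn) // => x /= h.
exact: leq_trans h (leq_pred n).
Qed.

Lemma count_iota_mono (a : pred nat) n n' : n <= n' -> count a (iota 0 n) <= count a (iota 0 n').
Proof. move=> nn'; by rewrite -(subnKC nn') iotaD count_cat leq_addr. Qed.

Lemma incr_unb (f : nat -> nat) : (forall n n', n <= n' -> f n <= f n') ->
  (forall L, exists n, L <= f n) -> forall m, exists n, m <= n /\ f n.-1 < f n.
Proof.
move=> mono unb m. have [n1 h1] := unb (f m).+1.
have mn1 : m <= n1.
  rewrite leqNgt; apply/negP => h; have := mono _ _ (ltnW h). by rewrite leqNgt h1.
suff : forall k, f m < f (m + k) -> exists n, m <= n /\ f n.-1 < f n.
  by move=> /(_ (n1 - m)); rewrite subnKC //; apply.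
elim=> [|k IH]; first by rewrite addn0 ltnn.
rewrite addnS => h. case: (ltnP (f m) (f (m + k))) => [h'|h']; first exact: IH.
exists (m + k).+1; split; first by rewrite -addnS leq_addr.
exact: leq_ltn_trans h' h.
Qed.

Lemma bnd_noinc (f : nat -> nat) B : (forall n n', n <= n' -> f n <= f n') ->
  (forall n, f n <= B) -> exists N, forall n, N <= n -> ~ (f n.-1 < f n).
Proof.
move=> mono hB. apply: NNPP => H.
have unb : forall L, exists n, L <= f n.
  elim=> [|L [n hn]]; first by exists 0.
  have [n' [nn' h]] : exists n', n.+1 <= n' /\ f n'.-1 < f n'.
    apply: NNPP => H2; apply: H; exists n.+1 => n' h' h''; apply: H2; exists n'; by split.
  exists n'. apply: leq_ltn_trans h. apply: leq_trans hn (mono _ _ _).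
  by case: n' nn'.
have [n hn] := unb B.+1. have := hB n. by rewrite leqNgt hn.
Qed.

Section Learner.
Variable sig : seq nat.
Variables (I : Type) (K : I -> structure sig) (code : I -> nat).
Hypothesis code_inj : injective code.
Hypothesis Kinj : forall i j, iso (K i) (K j) -> i = j.
Variable phi : I -> I -> form sig.
Hypothesis Hphi : forall i j, i <> j ->
  [/\ Sigma2_sentence (phi i j), models (K i) (phi i j) & ~ models (K j) (phi i j)].

Definition Dp (i : I) (p : nat) (d : nat * structure sig) : Prop :=
  match @unpickle (nat * (nat * seq nat))%type p with
  | None => True
  | Some (kj, c) => forall j, code j = kj -> j <> i -> deadC (phi j i) c d
  end.

Definition lev i d : nat := count (fun p => dec (forall p', p' <= p -> Dp i p' d)) (iota 0 d.1).
Definition inc i d : Prop := lev i (restrict d.2 d.1.-1) < lev i d.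
Definition best i d : Prop := inc i d /\ forall i', inc i' d -> code i <= code i'.
Definition learner (d : nat * structure sig) : option I :=
  match excluded_middle_informative (exists i, best i d) with
  | left H => Some (proj1_sig (constructive_indefinite_description _ H))
  | right _ => None
  end.

Lemma learnerP d i : learner d = Some i <-> best i d.
Proof.
rewrite /learner; case: excluded_middle_informative => [H|H].
- case: (constructive_indefinite_description _ H) => i0 hi0 /=. split=> [[<-] //|hi].
  congr Some; apply: code_inj; apply/eqP; by rewrite eqn_leq (hi0.2 _ hi.1) (hi.2 _ hi0.1).
- split=> // hi; case: H; by exists i.
Qed.

Lemma best_exists d i : inc i d -> exists i, best i d.
Proof.
suff : forall n i, code i <= n -> inc i d -> exists i, best i d by apply.
elim=> [|n IH] i0 ci hi;
  case: (classic (exists i', inc i' d /\ code i' < code i0)) => [[i' [h1 h2]]|h].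
- by move: (leq_trans h2 ci).
- exists i0; split => // i' hi'; rewrite leqNgt; apply/negP => c; apply h; by exists i'.
- apply: (IH i') => //. by rewrite -ltnS (leq_trans h2 ci).
- exists i0; split => // i' hi'; rewrite leqNgt; apply/negP => c; apply h; by exists i'.
Qed.

Lemma incE S i n : inc i (restrict S n) = (lev i (restrict S n.-1) < lev i (restrict S n)).
Proof. by rewrite /inc /= restr_restr. Qed.

Lemma Dp_mono S i p n n' : n <= n' -> Dp i p (restrict S n) -> Dp i p (restrict S n').
Proof.
rewrite /Dp => nn'; case: unpickle => // [[kj c]] H j cj ji. exact: dead_mono nn' (H j cj ji).
Qed.

Lemma lev_mono S i n n' : n <= n' -> lev i (restrict S n) <= lev i (restrict S n').
Proof.
move=> nn'; rewrite /lev /=. apply: leq_trans (count_iota_mono _ nn').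
apply: sub_count => p /decP H; apply/decP => p' hp'; exact: Dp_mono nn' (H p' hp').
Qed.

Lemma lev_unb S i : (forall p, exists n, Dp i p (restrict S n)) ->
  forall L, exists n, L <= lev i (restrict S n).
Proof.
move=> H.
have G : forall L, exists n, L <= n /\ forall p, p < L -> Dp i p (restrict S n).
  elim=> [|L [n [Ln Hn]]]; first by exists 0.
  have [nL HL] := H L.
  exists (maxn (maxn n nL) L.+1); split; first exact: leq_maxr.
  move=> p; rewrite ltnS leq_eqVlt => /orP[/eqP->|pL].
    by apply: Dp_mono HL; rewrite !leq_max leqnn ?orbT.
  by apply: Dp_mono (Hn p pL); rewrite !leq_max leqnn.
move=> L; have [n [Ln Hn]] := G L; exists n.
rewrite /lev /=. apply: leq_trans (count_iota_mono _ Ln).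
have -> : count (fun p => dec (forall p', p' <= p -> Dp i p' (restrict S n))) (iota 0 L) = L.
  rewrite -[X in _ = X](size_iota 0 L); apply/eqP; rewrite -all_count; apply/allP => p.
  rewrite mem_iota /= => pL; apply/decP => p' hp'; apply: Hn; exact: leq_ltn_trans hp' pL.
done.
Qed.

Lemma lev_bnd S i p0 : (forall n, ~ Dp i p0 (restrict S n)) ->
  forall n, lev i (restrict S n) <= p0.
Proof.
move=> H n; rewrite /lev /=.
case: (leqP n p0) => np.
  by apply: leq_trans (count_size _ _) _; rewrite size_iota.
have -> : iota 0 n = iota 0 p0 ++ iota p0 (n - p0) by rewrite -iotaD subnKC // ltnW.
rewrite count_cat.
have -> : count (fun p => dec (forall p', p' <= p -> Dp i p' (restrict S n))) (iota p0 (n - p0)) = 0.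
  apply/eqP; rewrite eqn0Ngt -has_count; apply/hasP => [[x]]; rewrite mem_iota => /andP[h _].
  move/decP => Hx; apply: (H n); exact: Hx.
by rewrite addn0 (leq_trans (count_size _ _)) // size_iota.
Qed.

Lemma L2 S i : LD K S -> (iso (K i) S <-> forall p, exists n, Dp i p (restrict S n)).
Proof.
case=> i0 iso0. split.
- move=> isoi p. rewrite /Dp. case E: (unpickle p) => [[kj c]|]; last by exists 0.
  case: (classic (exists j, code j = kj /\ j <> i)) => [[j [cj ji]]|nj]; last first.
    exists 0 => j' cj' ji'; case: nj; by exists j'.
  have [hs hm hn] := Hphi ji.
  have nS : ~ models S (phi j i).
    move=> hS; apply: hn; exact: models_iso (iso_sym isoi) hs.2 hS.
  have nc : ~ exists c, forall n, ~ deadC (phi j i) c (restrict S n).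
    move=> h; apply: nS; exact/(L1 S hs).
  have [n hn'] : exists n, deadC (phi j i) c (restrict S n).
    apply: NNPP => h; apply: nc; exists c => n hd; apply: h; by exists n.
  exists n => j' cj' ji'. have -> : j' = j by apply: code_inj; rewrite cj cj'.
  done.
- move=> H. apply: NNPP => ni.
  have i0i : i0 <> i by move=> e; apply: ni; rewrite -e.
  have [hs hm hn] := Hphi i0i.
  have hS : models S (phi i0 i) := models_iso iso0 hs.2 hm.
  have [c hc] := (L1 S hs).1 hS.
  have [n hn'] := H (pickle (code i0, c)).
  move: hn'; rewrite /Dp pickleK => /(_ i0 erefl i0i). exact: hc.
Qed.

Lemma not_iso_noinc S i : LD K S -> ~ iso (K i) S ->
  exists N, forall n, N <= n -> ~ inc i (restrict S n).
Proof.
move=> LDS ni.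
have [p0 Hp0] : exists p0, forall n, ~ Dp i p0 (restrict S n).
  apply: NNPP => h; apply: ni; apply/(L2 _ LDS) => p; apply: NNPP => h2; apply: h.
  exists p => n hd; apply: h2; by exists n.
have [N HN] := bnd_noinc (fun n n' => @lev_mono S i n n') (lev_bnd Hp0).
exists N => n Nn; rewrite incE; exact: HN.
Qed.

Lemma learnable : PL_learnable K.
Proof.
exists learner => S LDS i; split.
- move=> H; apply: NNPP => ni.
  have [N HN] := not_iso_noinc LDS ni.
  have [n [Nn /learnerP [hi _]]] := H N. exact: HN n Nn hi.
- move=> isoi.
  have others : forall i', i' <> i -> exists N, forall n, N <= n -> ~ inc i' (restrict S n).
    move=> i' i'i; apply: not_iso_noinc => // h; apply: i'i; apply: Kinj.
    exact: iso_trans h (iso_sym isoi).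
  have fin : forall k, exists N, forall n, N <= n -> forall i', code i' < k -> i' <> i ->
      ~ inc i' (restrict S n).
    elim=> [|k [N1 H1]]; first by exists 0.
    case: (classic (exists i', code i' = k /\ i' <> i)) => [[i1 [c1 i1i]]|h].
      have [N2 H2] := others i1 i1i.
      exists (maxn N1 N2) => n hn i' ci' i'i.
      move: ci'; rewrite ltnS leq_eqVlt => /orP[/eqP ci'|ci'].
        have -> : i' = i1 by apply: code_inj; rewrite ci' c1.
        apply: H2; exact: leq_trans (leq_maxr _ _) hn.
      apply: H1 => //; exact: leq_trans (leq_maxl _ _) hn.
    exists N1 => n hn i' ci' i'i.
    move: ci'; rewrite ltnS leq_eqVlt => /orP[/eqP ci'|ci'].
      by case: h; exists i'.
    exact: H1.
  have [N HN] := fin (code i).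
  have unb := lev_unb ((L2 _ LDS).1 isoi).
  move=> m.
  have [n [mn hn]] := incr_unb (fun n n' => @lev_mono S i n n') unb (maxn m N).
  exists n; split; first exact: leq_trans (leq_maxl _ _) mn.
  apply/learnerP; split; first by rewrite incE.
  move=> i' hi'. rewrite leqNgt; apply/negP => c.
  have i'i : i' <> i by move=> e; rewrite e ltnn in c.
  apply: (HN n _ i' c i'i hi'); exact: leq_trans (leq_maxr _ _) mn.
Qed.

End Learner.

Theorem mainTheorem14 (sig : seq nat) (I : Type) (K : I -> structure sig) :
  structure_family K -> (PL_learnable K <-> Sigma2_antichain K).
Proof.
case=> [[code code_inj] Kinj]. split.
- case=> M HM i j ij. apply: NNPP => nex.
  have onedir : forall i' j', i' <> j' ->
      (forall phi, Sigma2_sentence phi -> models (K i') phi -> models (K j') phi) -> False.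
    move=> i' j' ij' H1.
    apply: (@noPL sig I K M HM i' j' _ ij' Kinj) => a m.
    apply: phia_B. apply: H1; [exact: phia_S2 | exact: phia_A].
  have [phi [h1 [h2 h3]]] : exists phi, Sigma2_sentence phi /\ models (K i) phi /\ ~ models (K j) phi.
    apply: NNPP => h; apply: (onedir i j ij) => phi hs hm; apply: NNPP => hn; apply: h.
    by exists phi.
  have [psi [g1 [g2 g3]]] : exists psi, Sigma2_sentence psi /\ models (K j) psi /\ ~ models (K i) psi.
    apply: NNPP => h; apply: (onedir j i (nesym ij)) => psi hs hm; apply: NNPP => hn; apply: h.
    by exists psi.
  apply: nex; by exists phi, psi.
- move=> AC.
  have Hch : forall i j, exists f : form sig, i <> j ->
      [/\ Sigma2_sentence f, models (K i) f & ~ models (K j) f].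
    move=> i j; case: (classic (i = j)) => [->|ij]; first by exists (FQf (QTrue sig)).
    have [f [g [h1 [h2 [h3 [h4 _]]]]]] := AC i j ij. by exists f.
  pose phi i j := proj1_sig (constructive_indefinite_description _ (Hch i j)).
  apply: (@learnable sig I K code code_inj Kinj phi) => i j ij.
  exact: (proj2_sig (constructive_indefinite_description _ (Hch i j)) ij).
Qed.
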